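(* Let $M$ be a nonderogatory $d\times d$ complex matrix with minimal polynomial $\mathbf p$, and let $\mathbf p_+,\mathbf p_-,\boldsymbol\chi\in\mathbb C[X]$ be such that $\mathbf p_+\mathbf p_-$ divides $\mathbf p$ and $\boldsymbol\chi$ is relatively prime to $\mathbf p$. Then $\mathfrak B(\mathbf p_+,\mathbf p_-,\boldsymbol\chi)$ is a commutative algebra of block Toeplitz matrices (a linear subspace of $\mathcal T_{n,d}$ closed under multiplication and commutative).
   Context: A nonderogatory matrix is one whose minimal polynomial equals its characteristic polynomial; $\mathcal P(M)$ denotes the algebra of polynomials in $M$. With $\mathbf q=\mathbf p/(\mathbf p_+\mathbf p_-)$, $\mathfrak B(\mathbf p_+,\mathbf p_-,\boldsymbol\chi)$ is the set of $n\times n$ block Toeplitz matrices $A=(A_{i-j})_{i,j=0}^{n-1}$ such that (a) $A_i\in\mathcal P(M)$ for all $-(n-1)\le i\le n-1$; (b)–(c) for each $i=1,\dots,n-1$ there exist polynomials $\mathbf a_i,\mathbf a_{i-n}\in\mathbb C[X]$ with $A_i=\mathbf p_+(M)\mathbf a_i(M)$, $A_{i-n}=\mathbf p_-(M)\mathbf a_{i-n}(M)$, and $\mathbf q$ divides $\mathbf a_i-\boldsymbol\chi\,\mathbf a_{i-n}$. *)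

(* Defs.v *)
From HB Require Import structures.
From mathcomp Require Import all_boot all_order all_algebra.
Set Implicit Arguments. Unset Strict Implicit. Unset Printing Implicit Defensive.
Import Order.TTheory GRing.Theory Num.Theory.
Local Open Scope ring_scope.

Definition nonderogatory (F : fieldType) (d : nat) (M : 'M[F]_d.+1) : Prop :=
  mxminpoly M = char_poly M.

Definition inPM (F : fieldType) (d : nat) (M : 'M[F]_d.+1) (X : 'M[F]_d.+1) : Prop :=
  exists a : {poly F}, X = horner_mx M a.

(* The n x n block Toeplitz matrix (A_{i-j})_{i,j=0}^{n-1} with m x m blocks,
   built from the symbol A : int -> 'M_m (only the values at
   -(n-1) .. n-1 are used). *)
Definition btoep (F : fieldType) (n m : nat) (A : int -> 'M[F]_m)
  : 'M[F]_(\sum_(i < n) m) :=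
  @mxblock F n n (fun _ => m) (fun _ => m)
    (fun i j => A ((nat_of_ord i)%:Z - (nat_of_ord j)%:Z)).

Definition frakB (F : fieldType) (d n : nat) (M : 'M[F]_d.+1)
  (pp pm chi : {poly F}) (B : 'M[F]_(\sum_(i < n) d.+1)) : Prop :=
  exists A : int -> 'M[F]_d.+1,
    [/\ B = btoep n A,
        (forall i : int, - (n%:Z - 1) <= i <= n%:Z - 1 -> inPM M (A i)) &
        (forall i : nat, (1 <= i <= n - 1)%N ->
           exists ai ain : {poly F},
             [/\ A i%:Z = horner_mx M pp *m horner_mx M ai,
                 A (i%:Z - n%:Z) = horner_mx M pm *m horner_mx M ain &
                 (mxminpoly M %/ (pp * pm)) %| (ai - chi * ain)])].

(* Main.v *)
Require Import Defs.
From HB Require Import structures.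
From mathcomp Require Import all_boot all_order all_algebra.
From mathcomp Require Import zify ring.
Import Order.TTheory GRing.Theory Num.Theory.
Local Open Scope ring_scope.

Section Helpers.
Local Set Implicit Arguments.
Local Unset Strict Implicit.

Lemma submxblockZ (R : pzRingType) p q (p_ : 'I_p -> nat) (q_ : 'I_q -> nat) (c : R)
  (X : 'M[R]_(\sum_i p_ i, \sum_j q_ j)) i j :
  submxblock (c *: X) i j = c *: submxblock X i j.
Proof. by apply/matrixP => r s; rewrite /submxblock !mxE. Qed.

Lemma hmul (F : fieldType) d (M : 'M[F]_d.+1) a b :
  horner_mx M a *m horner_mx M b = horner_mx M (a * b).
Proof. by rewrite mulmxE rmorphM. Qed.

Lemma heq (F : fieldType) d (M : 'M[F]_d.+1) x y :
  mxminpoly M %| x - y -> horner_mx M x = horner_mx M y.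
Proof. by move=> /mxminpoly_minP; rewrite rmorphB => /eqP; rewrite subr_eq0 => /eqP. Qed.

Lemma sum_bij (V : zmodType) (n : nat) (s t : nat -> nat) (G : nat -> V) :
  (forall k, (k < n)%N -> (s k < n)%N) -> (forall k, (k < n)%N -> t (s k) = k) ->
  \sum_(k < n) G (s k) = \sum_(k < n) G k.
Proof.
move=> Hs Ht.
pose so (k : 'I_n) : 'I_n := Ordinal (Hs k (ltn_ord k)).
have so_inj : injective so.
  move=> k1 k2 /(congr1 val) /= E; apply/val_inj => /=.
  by rewrite -(Ht k1 (ltn_ord k1)) -(Ht k2 (ltn_ord k2)) E.
by rewrite [RHS](reindex_inj so_inj).
Qed.

Definition good {F : fieldType} {d} n (M : 'M[F]_d.+1) (pp pm chi : {poly F})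
  (A : int -> 'M[F]_d.+1) : Prop :=
  (forall i : int, - (n%:Z - 1) <= i <= n%:Z - 1 -> inPM M (A i)) /\
  (forall i : nat, (1 <= i <= n - 1)%N ->
           exists ai ain : {poly F},
             [/\ A i%:Z = horner_mx M pp *m horner_mx M ai,
                 A (i%:Z - n%:Z) = horner_mx M pm *m horner_mx M ain &
                 (mxminpoly M %/ (pp * pm)) %| (ai - chi * ain)]).

Lemma frakBP (F : fieldType) d n (M : 'M[F]_d.+1) pp pm chi B :
  @frakB F d n M pp pm chi B <-> exists A, B = btoep n A /\ good n M pp pm chi A.
Proof.
split; first by move=> [A [-> H1 H2]]; exists A; split=> //; split.
by move=> [A [-> [H1 H2]]]; exists A; split.
Qed.

Lemma good_in (F : fieldType) d n (M : 'M[F]_d.+1) pp pm chi A :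
  good n M pp pm chi A -> forall x : int, - (n%:Z - 1) <= x <= n%:Z - 1 ->
  exists a, A x = horner_mx M a.
Proof. by move=> [H _] x /H [a ->]; exists a. Qed.

Lemma good_pos (F : fieldType) d n (M : 'M[F]_d.+1) pp pm chi A :
  good n M pp pm chi A -> forall x : int, 0 < x < n%:Z ->
  exists a b, [/\ A x = horner_mx M (pp * a), A (x - n%:Z) = horner_mx M (pm * b) &
     (mxminpoly M %/ (pp * pm)) %| (a - chi * b)].
Proof.
move=> [_ H] [u|u] Hx; last by lia.
have [|a [b [E1 E2 E3]]] := H u; first by lia.
by exists a, b; rewrite -!hmul.
Qed.

Lemma inPM_comm (F : fieldType) d (M : 'M[F]_d.+1) X Y :
  inPM M X -> inPM M Y -> X *m Y = Y *m X.
Proof. by move=> [a ->] [b ->]; rewrite !hmul mulrC. Qed.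

Lemma goodK (F : fieldType) d n (M : 'M[F]_d.+1) pp pm chi A B :
  pp * pm %| mxminpoly M ->
  good n M pp pm chi A -> good n M pp pm chi B ->
  forall x y : int, 0 < x < n%:Z -> 0 < y < n%:Z ->
  A x *m B (y - n%:Z) = A (x - n%:Z) *m B y.
Proof.
move=> Hd gA gB x y Hx Hy.
have [a [b [E1 E2 E3]]] := good_pos gA Hx.
have [a' [b' [E1' E2' E3']]] := good_pos gB Hy.
rewrite E1 E2 E1' E2' !hmul; apply: heq.
rewrite -(divpK Hd).
have -> : pp * a * (pm * b') - pm * b * (pp * a') =
   ((a - chi * b) * b' - b * (a' - chi * b')) * (pp * pm) by ring.
apply: dvdp_mul => //; apply: dvdp_sub; [exact: dvdp_mulr | exact: dvdp_mull].
Qed.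

Lemma good3 (F : fieldType) d n (M : 'M[F]_d.+1) pp pm chi A :
  pp * pm %| mxminpoly M ->
  good n M pp pm chi A ->
  forall x : int, 0 < x < n%:Z ->
  horner_mx M pm *m A x = horner_mx M (chi * pp) *m A (x - n%:Z).
Proof.
move=> Hd gA x Hx.
have [a [b [E1 E2 E3]]] := good_pos gA Hx.
rewrite E1 E2 !hmul; apply: heq.
rewrite -(divpK Hd).
have -> : pm * (pp * a) - chi * pp * (pm * b) = (a - chi * b) * (pp * pm) by ring.
exact: dvdp_mul.
Qed.

Lemma inPM0 (F : fieldType) d (M : 'M[F]_d.+1) : inPM M 0.
Proof. by exists 0; rewrite rmorph0. Qed.

Lemma inPMD (F : fieldType) d (M : 'M[F]_d.+1) X Y :
  inPM M X -> inPM M Y -> inPM M (X + Y).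
Proof. by move=> [a ->] [b ->]; exists (a + b); rewrite rmorphD. Qed.

Lemma inPMM (F : fieldType) d (M : 'M[F]_d.+1) X Y :
  inPM M X -> inPM M Y -> inPM M (X *m Y).
Proof. by move=> [a ->] [b ->]; exists (a * b); rewrite hmul. Qed.

Lemma inPM_sum (F : fieldType) d (M : 'M[F]_d.+1) n (G : nat -> 'M[F]_d.+1) :
  (forall l, (l < n)%N -> inPM M (G l)) -> inPM M (\sum_(l < n) G l).
Proof.
move=> H; apply: (big_ind (inPM M)); [exact: inPM0 | exact: inPMD |].
by move=> l _; apply: H.
Qed.

Lemma ppM_sum (F : fieldType) d (M : 'M[F]_d.+1) (r : {poly F}) n (G : nat -> 'M[F]_d.+1) :
  (forall l, (l < n)%N -> exists c, G l = horner_mx M (r * c)) ->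
  exists c, \sum_(l < n) G l = horner_mx M (r * c).
Proof.
move=> H; apply: (big_ind (fun X => exists c, X = horner_mx M (r * c))).
- by exists 0; rewrite mulr0 rmorph0.
- by move=> X Y [a ->] [b ->]; exists (a + b); rewrite mulrDr rmorphD.
- by move=> l _; apply: H.
Qed.

Definition Emx (F : fieldType) d n (A B : int -> 'M[F]_d.+1) (i j : nat) :=
  \sum_(l < n) A (i%:Z - l%:Z) *m B (l%:Z - j%:Z).

Lemma Emx_shift (F : fieldType) d n (M : 'M[F]_d.+1) pp pm chi A B :
  pp * pm %| mxminpoly M ->
  good n M pp pm chi A -> good n M pp pm chi B ->
  forall i j, (i.+1 < n)%N -> (j.+1 < n)%N -> Emx n A B i.+1 j.+1 = Emx n A B i j.
Proof.
move=> Hd gA gB i j Hi Hj; rewrite /Emx.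
rewrite -(@sum_bij _ n (fun l => if l == n.-1 then 0%N else l.+1)
                  (fun l => if l == 0%N then n.-1 else l.-1)
    (fun l : nat => A (i.+1%:Z - l%:Z) *m B (l%:Z - j.+1%:Z))); first last.
- by move=> k Hk /=; case: (k =P n.-1) => [->|H].
- by move=> k Hk /=; case: (k =P n.-1) => H; lia.
apply: eq_bigr => [[l Hl]] _ /=.
case: eqP => [El|Hne].
  have := goodK Hd gA gB (x := i.+1%:Z) (y := n%:Z - j.+1%:Z) ltac:(lia) ltac:(lia).
  move=> H; transitivity (A i.+1%:Z *m B (n%:Z - j.+1%:Z - n%:Z)).
    by congr (A _ *m B _); lia.
  by rewrite H; congr (A _ *m B _); lia.
by congr (A _ *m B _); lia.
Qed.

Definition Cmx (F : fieldType) d n (A B : int -> 'M[F]_d.+1) (k : int) :=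
  if 0 <= k then Emx n A B `|k|%N 0 else Emx n A B 0 `|k|%N.

Lemma Emx_toep (F : fieldType) d n (M : 'M[F]_d.+1) pp pm chi A B :
  pp * pm %| mxminpoly M ->
  good n M pp pm chi A -> good n M pp pm chi B ->
  forall i j, (i < n)%N -> (j < n)%N -> Emx n A B i j = Cmx n A B (i%:Z - j%:Z).
Proof.
move=> Hd gA gB.
have shift t : forall i j, (i + t < n)%N -> (j + t < n)%N ->
    Emx n A B (i + t) (j + t) = Emx n A B i j.
  elim: t => [|t IH] i j Hi Hj; first by rewrite !addn0.
  rewrite !addnS (Emx_shift Hd gA gB); [apply: IH| |]; lia.
move=> i j Hi Hj; rewrite /Cmx; case: leP => H.
  have -> : `|i%:Z - j%:Z|%N = (i - j)%N by lia.
  have := shift j (i - j)%N 0%N ltac:(lia) ltac:(lia).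
  by rewrite add0n subnK //; lia.
have -> : `|i%:Z - j%:Z|%N = (j - i)%N by lia.
have := shift i 0%N (j - i)%N ltac:(lia) ltac:(lia).
by rewrite add0n subnK //; lia.
Qed.

Lemma btoep_mul (F : fieldType) d n (M : 'M[F]_d.+1) pp pm chi A B :
  pp * pm %| mxminpoly M ->
  good n M pp pm chi A -> good n M pp pm chi B ->
  btoep n A *m btoep n B = btoep n (Cmx n A B).
Proof.
move=> Hd gA gB; rewrite /btoep mul_mxblock; apply: eq_mxblock => i j.
exact: (Emx_toep Hd gA gB (ltn_ord i) (ltn_ord j)).
Qed.

Lemma Emx_inPM (F : fieldType) d n (M : 'M[F]_d.+1) pp pm chi A B :
  good n M pp pm chi A -> good n M pp pm chi B ->
  forall a b, (a < n)%N -> (b < n)%N -> inPM M (Emx n A B a b).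
Proof.
move=> [gA _] [gB _] a b Ha Hb; apply: (inPM_sum (G := fun l : nat => A (a%:Z - l%:Z) *m B (l%:Z - b%:Z))) => l Hl.
apply: inPMM; [apply: gA | apply: gB]; lia.
Qed.

Lemma Cmx_pos (F : fieldType) d n (M : 'M[F]_d.+1) pp pm chi A B :
  good n M pp pm chi A -> good n M pp pm chi B ->
  forall i : nat, (1 <= i <= n - 1)%N ->
  exists c, Cmx n A B i%:Z = horner_mx M (pp * c).
Proof.
move=> gA gB i Hi; rewrite /Cmx.
have -> : (0 <= i%:Z) = true by lia.
have -> : `|i%:Z|%N = i by lia.
apply: (ppM_sum (G := fun l : nat => A (i%:Z - l%:Z) *m B (l%:Z - 0%:Z))) => -[|l] Hl.
  have [a [b [E1 _ _]]] := good_pos gA (x := i%:Z) ltac:(lia).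
  have [be Eb] := good_in gB (x := 0%:Z - 0%:Z) ltac:(lia).
  rewrite Eb (_ : i%:Z - 0%:Z = i%:Z); last by lia.
  by exists (a * be); rewrite E1 hmul mulrA.
have [a [b [E1 _ _]]] := good_pos gB (x := l.+1%:Z) ltac:(lia).
have [al Ea] := good_in gA (x := i%:Z - l.+1%:Z) ltac:(lia).
rewrite Ea (_ : l.+1%:Z - 0%:Z = l.+1%:Z); last by lia.
by exists (al * a); rewrite E1 hmul mulrCA.
Qed.

Lemma Cmx_neg (F : fieldType) d n (M : 'M[F]_d.+1) pp pm chi A B :
  good n M pp pm chi A -> good n M pp pm chi B ->
  forall i : nat, (1 <= i <= n - 1)%N ->
  exists c, Cmx n A B (i%:Z - n%:Z) = horner_mx M (pm * c).
Proof.
move=> gA gB i Hi; rewrite /Cmx.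
have -> : (0 <= i%:Z - n%:Z) = false by lia.
have -> : `|i%:Z - n%:Z|%N = (n - i)%N by lia.
apply: (ppM_sum (G := fun l : nat => A (0%:Z - l%:Z) *m B (l%:Z - (n - i)%:Z))) => -[|l] Hl.
  have [a [b [_ E2 _]]] := good_pos gB (x := i%:Z) ltac:(lia).
  have [al Ea] := good_in gA (x := 0%:Z - 0%:Z) ltac:(lia).
  rewrite Ea (_ : 0%:Z - (n - i)%:Z = i%:Z - n%:Z); last by lia.
  by exists (al * b); rewrite E2 hmul mulrCA.
have [a [b [_ E2 _]]] := good_pos gA (x := (n - l.+1)%:Z) ltac:(lia).
have [be Eb] := good_in gB (x := l.+1%:Z - (n - i)%:Z) ltac:(lia).
rewrite Eb (_ : 0%:Z - l.+1%:Z = (n - l.+1)%:Z - n%:Z); last by lia.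
by exists (b * be); rewrite E2 hmul mulrA.
Qed.

Lemma Cmx_3 (F : fieldType) d n (M : 'M[F]_d.+1) pp pm chi A B :
  pp * pm %| mxminpoly M ->
  good n M pp pm chi A -> good n M pp pm chi B ->
  forall i : nat, (1 <= i <= n - 1)%N ->
  horner_mx M pm *m Cmx n A B i%:Z =
  horner_mx M (chi * pp) *m Cmx n A B (i%:Z - n%:Z).
Proof.
move=> Hd gA gB i Hi; rewrite /Cmx.
have -> : (0 <= i%:Z) = true by lia.
have -> : `|i%:Z|%N = i by lia.
have -> : (0 <= i%:Z - n%:Z) = false by lia.
have -> : `|i%:Z - n%:Z|%N = (n - i)%N by lia.
rewrite /Emx !mulmx_sumr.
rewrite -[RHS](@sum_bij _ n (fun l => if (i <= l)%N then (l - i)%N else (l + n - i)%N)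
                  (fun l => if (l + i < n)%N then (l + i)%N else (l + i - n)%N)
   (fun l : nat => horner_mx M (chi * pp) *m (A (0%:Z - l%:Z) *m B (l%:Z - (n - i)%:Z)))); first last.
- move=> k Hk /=; case: (leqP i k) => H; case: ifP => Hh; lia.
- by move=> k Hk /=; case: (leqP i k) => H; lia.
apply: eq_bigr => [[l Hl]] _ /=.
case: leqP => Hil.
  have [al Ea] := good_in gA (x := i%:Z - l%:Z) ltac:(lia).
  have [a [b [E1 E2 E3]]] := good_pos gB (x := l%:Z) ltac:(lia).
  rewrite (_ : 0%:Z - (l - i)%:Z = i%:Z - l%:Z); last by lia.
  rewrite (_ : (l - i)%:Z - (n - i)%:Z = l%:Z - n%:Z); last by lia.
  rewrite (_ : l%:Z - 0%:Z = l%:Z); last by lia.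
  rewrite Ea E1 E2 !hmul; apply: heq; rewrite -(divpK Hd).
  have -> : pm * (al * (pp * a)) - chi * pp * (al * (pm * b)) =
     (a - chi * b) * al * (pp * pm) by ring.
  by apply: dvdp_mul => //; apply: dvdp_mulr.
have [be Eb] := good_in gB (x := l%:Z) ltac:(lia).
have [a [b [E1 E2 E3]]] := good_pos gA (x := i%:Z - l%:Z) ltac:(lia).
rewrite (_ : 0%:Z - (l + n - i)%:Z = i%:Z - l%:Z - n%:Z); last by lia.
rewrite (_ : (l + n - i)%:Z - (n - i)%:Z = l%:Z); last by lia.
rewrite (_ : l%:Z - 0%:Z = l%:Z); last by lia.
rewrite Eb E1 E2 !hmul; apply: heq; rewrite -(divpK Hd).
have -> : pm * (pp * a * be) - chi * pp * (pm * b * be) =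
   (a - chi * b) * be * (pp * pm) by ring.
by apply: dvdp_mul => //; apply: dvdp_mulr.
Qed.

Lemma good_mul (F : fieldType) d n (M : 'M[F]_d.+1) pp pm chi A B :
  pp * pm %| mxminpoly M ->
  good n M pp pm chi A -> good n M pp pm chi B ->
  good n M pp pm chi (Cmx n A B).
Proof.
move=> Hd gA gB; split.
  move=> k Hk; rewrite /Cmx; case: ifP => Hk0; apply: (Emx_inPM gA gB); lia.
move=> i Hi.
have [c Ec] := Cmx_pos gA gB Hi.
have [c' Ec'] := Cmx_neg gA gB Hi.
exists c, c'; split; rewrite ?hmul //.
have := Cmx_3 Hd gA gB Hi; rewrite Ec Ec' !hmul => /eqP.
rewrite -subr_eq0 -rmorphB => /eqP /mxminpoly_min.
have nz : pp * pm != 0.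
  apply/negP => /eqP E; move: Hd; rewrite E dvd0p => /eqP E2.
  by have := monic_neq0 (mxminpoly_monic M); rewrite E2 eqxx.
move=> H; move: H; set q := mxminpoly M %/ (pp * pm); rewrite -(divpK Hd).
have -> : pm * (pp * c) - chi * pp * (pm * c') = (c - chi * c') * (pp * pm) by ring.
by rewrite dvdp_mul2r.
Qed.

Lemma Emx_comm (F : fieldType) d n (M : 'M[F]_d.+1) pp pm chi A B :
  pp * pm %| mxminpoly M ->
  good n M pp pm chi A -> good n M pp pm chi B ->
  forall i j, (i < n)%N -> (j < n)%N -> Emx n A B i j = Emx n B A i j.
Proof.
move=> Hd gA gB i j Hi Hj; rewrite /Emx.
pose s l := if (l <= i + j)%N then (if (i + j - l < n)%N then (i + j - l)%N else (i + j - l - n)%N)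
            else (i + j + n - l)%N.
rewrite -[RHS](@sum_bij _ n s s
   (fun l : nat => B (i%:Z - l%:Z) *m A (l%:Z - j%:Z))); first last.
- move=> k Hk; rewrite /s; case: (leqP k (i + j)) => H1; last first.
    by case: (leqP (i + j + n - k) (i + j)) => H2 /=; lia.
  case: (ltnP (i + j - k) n) => H2.
    case: (leqP (i + j - k) (i + j)) => H3 /=; last lia.
    by case: ifP => H4; lia.
  case: (leqP (i + j - k - n) (i + j)) => H3 /=; last lia.
  by case: ifP => H4; lia.
- move=> k Hk; rewrite /s; case: (leqP k (i + j)) => H1; [case: ifP => H2|]; lia.
apply: eq_bigr => [[l Hl]] _ /=; rewrite /s.
have [gA1 _] := gA; have [gB1 _] := gB.
case: (leqP l (i + j)) => H1; last first.
  have := goodK Hd gA gB (x := i%:Z - l%:Z + n%:Z) (y := l%:Z - j%:Z) ltac:(lia) ltac:(lia).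
  move=> H; transitivity (A (i%:Z - l%:Z + n%:Z - n%:Z) *m B (l%:Z - j%:Z)).
    by congr (A _ *m B _); lia.
  rewrite -H (inPM_comm (M := M)); [|apply: gA1; lia|apply: gB1; lia].
  by congr (B _ *m A _); lia.
case: ifP => H2.
  rewrite (inPM_comm (M := M)); [|apply: gA1; lia|apply: gB1; lia].
  by congr (B _ *m A _); lia.
have := goodK Hd gA gB (x := i%:Z - l%:Z) (y := l%:Z - j%:Z + n%:Z) ltac:(lia) ltac:(lia).
move=> H; transitivity (A (i%:Z - l%:Z) *m B (l%:Z - j%:Z + n%:Z - n%:Z)).
  by congr (A _ *m B _); lia.
rewrite H (inPM_comm (M := M)); [|apply: gA1; lia|apply: gB1; lia].
by congr (B _ *m A _); lia.
Qed.
End Helpers.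

Theorem theorem6p2 (F : numClosedFieldType) (d n : nat) (M : 'M[F]_d.+1)
    (pp pm chi : {poly F}) :
  nonderogatory M ->
  pp * pm %| mxminpoly M ->
  coprimep chi (mxminpoly M) ->
  [/\ @frakB F d n M pp pm chi 0,
      (forall B1 B2, @frakB F d n M pp pm chi B1 -> @frakB F d n M pp pm chi B2 ->
         @frakB F d n M pp pm chi (B1 + B2)),
      (forall (c : F) B, @frakB F d n M pp pm chi B -> @frakB F d n M pp pm chi (c *: B)),
      (forall B1 B2, @frakB F d n M pp pm chi B1 -> @frakB F d n M pp pm chi B2 ->
         @frakB F d n M pp pm chi (B1 *m B2)) &
      (forall B1 B2, @frakB F d n M pp pm chi B1 -> @frakB F d n M pp pm chi B2 ->
         B1 *m B2 = B2 *m B1)].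
Proof.
move=> _ Hd _; split.
- apply/frakBP; exists (fun _ => 0); split; first by rewrite /btoep mxblock0.
  split; first by move=> *; apply: inPM0.
  move=> i Hi; exists 0, 0; split; rewrite ?rmorph0 ?mulmx0 //.
  by rewrite mulr0 subr0 dvdp0.
- move=> B1 B2 /frakBP [A1 [-> [g1 h1]]] /frakBP [A2 [-> [g2 h2]]].
  apply/frakBP; exists (fun k => A1 k + A2 k); split; first by rewrite /btoep -mxblockD.
  split; first by move=> k Hk; apply: inPMD; [apply: g1|apply: g2].
  move=> i Hi; have [a1 [b1 [E1 E2 E3]]] := h1 i Hi; have [a2 [b2 [E1' E2' E3']]] := h2 i Hi.
  exists (a1 + a2), (b1 + b2); split; rewrite ?rmorphD ?mulmxDr ?E1 ?E2 ?E1' ?E2' //.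
  have -> : a1 + a2 - chi * (b1 + b2) = (a1 - chi * b1) + (a2 - chi * b2) by ring.
  exact: dvdp_add.
- move=> c B /frakBP [A [-> [g h]]].
  apply/frakBP; exists (fun k => c *: A k); split.
    by apply/mxblockP => i j; rewrite submxblockZ !mxblockK.
  split; first by move=> k /g [a ->]; exists (c *: a); rewrite linearZ.
  move=> i Hi; have [a [b [E1 E2 E3]]] := h i Hi.
  exists (c *: a), (c *: b); split.
  - by rewrite linearZ /= -scalemxAr E1.
  - by rewrite linearZ /= -scalemxAr E2.
  have -> : c *: a - chi * (c *: b) = c%:P * (a - chi * b).
    by rewrite -!mul_polyC; ring.
  exact: dvdp_mull.
- move=> B1 B2 /frakBP [A1 [-> g1]] /frakBP [A2 [-> g2]].
  apply/frakBP; exists (Cmx n A1 A2); split; first exact: (btoep_mul Hd g1 g2).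
  exact: good_mul.
- move=> B1 B2 /frakBP [A1 [-> g1]] /frakBP [A2 [-> g2]].
  rewrite /btoep !mul_mxblock; apply: eq_mxblock => i j.
  exact: (Emx_comm Hd g1 g2 (ltn_ord i) (ltn_ord j)).
Qed.
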